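(* Let $G$ be a finitely presented group with non-trivial finite residual $R_G$. Let $s_1,\ldots,s_m$ be non-trivial elements of $G$ contained in $R_G$, let $S=\{s_1,\ldots,s_m\}$ and let $H$ be the normal subgroup of $G$ generated by $S$. Then \[rdef(G/H)\ge rdef(G)-relsize(S;G,R_G).\]
   Context: $R_G$ is the intersection of all finite index subgroups of $G$. Residual deficiency: for a finitely presented group $K$ and finite presentation $Q=\langle X\mid R\rangle$ with $X$ freely generating $F_n$, $\varphi:F_n\to K$ canonical, write $R=\{u_1^{m_1},\ldots,u_t^{m_t}\}$ with $u_i$ not proper powers in $F_n$, let $k_i$ be the order of $\varphi(u_i)R_K$ in $K/R_K$; $rdef(Q)=n-\sum 1/k_i$ and $rdef(K)=\sup_Q rdef(Q)$ over finite presentations. Relative size: for $g\in G$ and $\pi:G\to G/R_G$, if $g\in R_G$, $\nu(g;G,R_G)$ is the supremum of the orders of $\pi(a)$ over all $a\in G$ with $a^n=g$ for some integer $n$; if $g\notin R_G$ it is the supremum of non-zero integers $n$ with $g=a^n$ for some $a\in G$; $\nu^{-1}:=0$ if $\nu$ is infinite; $relsize(S;G,R_G)=\sum_{i=1}^m\nu(s_i;G,R_G)^{-1}$. *)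

(* Defs.v *)
From HB Require Import structures.
From mathcomp Require Import all_boot all_order all_algebra.
From mathcomp Require Import monoid.
From mathcomp Require Import all_classical all_reals ereal.

Set Implicit Arguments.
Unset Strict Implicit.
Unset Printing Implicit Defensive.

Import Order.TTheory GRing.Theory Num.Theory.

Local Open Scope classical_set_scope.

(* A letter (i, false) is x_i, (i, true) is x_i^{-1}.                   *)
(* Elements of the free group F_n are represented by words; two words  *)
(* represent the same element of F_n iff their free reductions agree.  *)
Definition letter (n : nat) := ('I_n * bool)%type.
Definition word (n : nat) := seq (letter n).

Definition linv n (a : letter n) : letter n := (a.1, ~~ a.2).

Definition cons_red n (a : letter n) (s : word n) : word n :=
  if s is b :: s' then (if b == linv a then s' else a :: s) else [:: a].

Definition fred n (w : word n) : word n := foldr (@cons_red n) [::] w.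

Definition winv n (w : word n) : word n := rev (map (@linv n) w).

Definition wpow n (u : word n) (m : nat) : word n := flatten (nseq m u).

Definition proper_power n (u : word n) : Prop :=
  exists (v : word n) (k : nat), (2 <= k)%N /\ fred u = fred (wpow v k).

Definition in_nclosure_F n (rels : seq (word n)) (w : word n) : Prop :=
  exists l : seq (word n * word n * bool),
    (forall t, t \in l -> t.1.2 \in rels) /\
    fred w = fred (flatten [seq t.1.1 ++ (if t.2 then winv t.1.2 else t.1.2)
                                 ++ winv t.1.1 | t <- l]).

Local Open Scope group_scope.

Definition eval_word (K : groupType) n (f : 'I_n -> K) (w : word n) : K :=
  foldr (fun a x => (if a.2 then (f a.1)^-1 else f a.1) * x) 1 w.

Definition is_presentation (K : groupType) n (rels : seq (word n))
    (f : 'I_n -> K) : Prop :=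
  (forall x : K, exists w : word n, eval_word f w = x) /\
  (forall w : word n, eval_word f w = 1 <-> in_nclosure_F rels w).

Definition finitely_presented (K : groupType) : Prop :=
  exists n (rels : seq (word n)) (f : 'I_n -> K), is_presentation rels f.

Definition is_subgroup (K : groupType) (H : K -> Prop) : Prop :=
  H 1 /\ (forall x y, H x -> H y -> H (x * y)) /\ (forall x, H x -> H x^-1).

Definition finite_index (K : groupType) (H : K -> Prop) : Prop :=
  exists reps : seq K, forall x : K, exists2 r, r \in reps & H (r^-1 * x).

Definition in_finres (K : groupType) (x : K) : Prop :=
  forall H : K -> Prop, is_subgroup H -> finite_index H -> H x.

Definition gexpz (K : groupType) (a : K) (z : int) : K :=
  match z with
  | Posz k => a ^+ k
  | Negz k => (a ^+ k.+1)^-1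
  end.

Definition in_nclosure (K : groupType) (S : seq K) (x : K) : Prop :=
  exists l : seq (K * K * bool),
    (forall t, t \in l -> t.1.2 \in S) /\
    x = foldr (fun t acc =>
                 (t.1.1^-1 * (if t.2 then t.1.2^-1 else t.1.2) * t.1.1) * acc)
              1 l.

Local Close Scope group_scope.
Local Open Scope ring_scope.
Local Open Scope ereal_scope.

(* order of the image of g in K / R_K (+oo if infinite) *)
Definition ord_mod_res (R : realType) (K : groupType) (g : K) : \bar R :=
  ereal_inf [set ((k%:R : R)%:E) | k in
             [set k : nat | (0 < k)%N /\ in_finres (g ^+ k)%g]].

(* x^{-1}, with the convention (+oo)^{-1} := 0 *)
Definition einv (R : realType) (x : \bar R) : R :=
  match x with EFin r => (r^-1)%R | _ => 0%R end.

Definition rdef (R : realType) (K : groupType) : \bar R :=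
  ereal_sup [set x : \bar R | exists (n : nat) (ps : seq (word n * nat))
      (f : 'I_n -> K),
      (forall p, p \in ps -> ~ proper_power p.1 /\ (0 < p.2)%N) /\
      is_presentation [seq wpow p.1 p.2 | p <- ps] f /\
      x = ((n%:R - \sum_(p <- ps) einv (ord_mod_res R (eval_word f p.1)))%R)%:E].

Definition nu (R : realType) (K : groupType) (g : K) : \bar R :=
  if `[< in_finres g >] then
    ereal_sup [set ord_mod_res R a | a in
               [set a : K | exists z : int, gexpz a z = g]]
  else
    ereal_sup [set ((z%:~R : R)%:E) | z in
               [set z : int | z != 0%R /\ exists a : K, g = gexpz a z]].

Definition relsize (R : realType) (K : groupType) (S : seq K) : R :=
  (\sum_(s <- S) einv (nu R s))%R.

(* Main.v *)
Require Import Defs.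
From HB Require Import structures.
From mathcomp Require Import all_boot all_order all_algebra.
From mathcomp Require Import monoid.
From mathcomp Require Import all_classical all_reals ereal.
From mathcomp Require Import zify lra.
Set Implicit Arguments.
Unset Strict Implicit.
Unset Printing Implicit Defensive.
Import Order.TTheory GRing.Theory Num.Theory.

Fixpoint reduced n (w : word n) : bool :=
  match w with
  | a :: ((b :: _) as t) => (b != linv a) && reduced t
  | _ => true
  end.

Lemma linvK n (a : letter n) : linv (linv a) = a.
Proof. by case: a => i b; rewrite /linv /= negbK. Qed.

Lemma linv_inj n : injective (@linv n).
Proof. exact: (can_inj (@linvK n)). Qed.

Lemma red_cons n (a : letter n) s : reduced s -> reduced (cons_red a s).
Proof.
case: s => [|b s] //= H.
case: ifP => [/eqP E|E]; last by rewrite /= E.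
by case: s H => [|c s] //= /andP[].
Qed.

Lemma red_foldr n (t u : word n) : reduced t -> reduced (foldr (@cons_red n) t u).
Proof. by move=> Ht; elim: u => //= a u IH; apply: red_cons. Qed.

Lemma fred_red n (w : word n) : reduced (fred w).
Proof. exact: red_foldr. Qed.

Lemma fred_id n (w : word n) : reduced w -> fred w = w.
Proof.
elim: w => // a t IH /= Hr.
have Ht : reduced t by case: t Hr IH => // b t /andP[].
rewrite /fred /= -/(fred t) (IH Ht).
by case: t Hr {IH Ht} => //= b t /andP[/negbTE -> _].
Qed.

Lemma fredK n (w : word n) : fred (fred w) = fred w.
Proof. exact/fred_id/fred_red. Qed.

Lemma cancel2 n (a : letter n) s : reduced s -> cons_red a (cons_red (linv a) s) = s.
Proof.
case: s => [|b s] /=; first by rewrite eqxx.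
case: ifP => [/eqP E|E].
  rewrite linvK in E; subst b => Hr.
  by case: s Hr => [|c s] //= /andP[/negbTE -> _].
by move=> _; rewrite /= eqxx.
Qed.

Lemma foldr_fred n (t u : word n) : reduced t ->
  foldr (@cons_red n) t u = foldr (@cons_red n) t (fred u).
Proof.
move=> Ht; elim: u => //= a u IH.
rewrite IH /fred /= -/(fred u).
case E: (fred u) => [|b s] //=.
case: ifP => [/eqP Eb|Eb] //=.
subst b; rewrite cancel2 //.
exact: red_foldr.
Qed.

Lemma fred_cat n (x y : word n) : fred (x ++ y) = foldr (@cons_red n) (fred y) x.
Proof. by rewrite /fred foldr_cat. Qed.

Lemma fred_catl n (x y : word n) : fred (x ++ y) = fred (fred x ++ y).
Proof. rewrite !fred_cat; apply: foldr_fred; exact: fred_red. Qed.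

Lemma fred_catr n (x y : word n) : fred (x ++ y) = fred (x ++ fred y).
Proof. by rewrite !fred_cat fredK. Qed.

Lemma fred_cancel n (x y : word n) a : fred (x ++ a :: linv a :: y) = fred (x ++ y).
Proof.
rewrite !fred_cat /=; rewrite -/(fred y).
have -> : cons_red a (cons_red (linv a) (fred y)) = fred y by apply: cancel2; exact: fred_red.
by [].
Qed.

Definition feq n (u v : word n) := fred u = fred v.

Lemma feq_cat n (x x' y y' : word n) : fred x = fred x' -> fred y = fred y' ->
  fred (x ++ y) = fred (x' ++ y').
Proof. by move=> Ex Ey; rewrite fred_catl Ex -fred_catl fred_catr Ey -fred_catr. Qed.

Lemma winv_cat n (x y : word n) : winv (x ++ y) = winv y ++ winv x.
Proof. by rewrite /winv map_cat rev_cat. Qed.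

Lemma winvK n (x : word n) : winv (winv x) = x.
Proof. by rewrite /winv map_rev revK -map_comp map_id_in // => a _; rewrite /= linvK. Qed.

Lemma winv_cons n a (x : word n) : winv (a :: x) = winv x ++ [:: linv a].
Proof. by rewrite /winv /= rev_cons cats1. Qed.

Lemma fred_winvr n (x : word n) : fred (x ++ winv x) = [::].
Proof.
elim: x => //= a x IH.
rewrite winv_cons catA /fred /= -/(fred _) fred_catl IH /=.
by rewrite eqxx.
Qed.

Lemma fred_winvl n (x : word n) : fred (winv x ++ x) = [::].
Proof. by rewrite -{2}(winvK x) fred_winvr. Qed.

Lemma winv_nil n : winv ([::] : word n) = [::]. Proof. by []. Qed.

Lemma fred_cancelw n (x g y : word n) : fred (x ++ g ++ winv g ++ y) = fred (x ++ y).
Proof.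
rewrite fred_catr (catA g) (fred_catl (g ++ winv g)) fred_winvr /= -fred_catr //.
Qed.

Lemma fred_cancelw' n (x g y : word n) : fred (x ++ winv g ++ g ++ y) = fred (x ++ y).
Proof. by rewrite -{2}(winvK g) fred_cancelw. Qed.

Lemma fred_winv n (x y : word n) : fred x = fred y -> fred (winv x) = fred (winv y).
Proof.
move=> E.
have -> : fred (winv x) = fred (winv x ++ y ++ winv y ++ [::]).
  by rewrite fred_cancelw cats0.
rewrite catA fred_catl (fred_catr (winv x)) -E -fred_catr fred_winvl /=.
by rewrite cats0.
Qed.

Definition hw n n' (h : letter n -> word n') (w : word n) : word n' := flatten (map h w).

Definition hcompat n n' (h : letter n -> word n') := forall a, h (linv a) = winv (h a).

Lemma hw_cat n n' (h : letter n -> word n') x y : hw h (x ++ y) = hw h x ++ hw h y.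
Proof. by rewrite /hw map_cat flatten_cat. Qed.

Lemma hw_cons n n' (h : letter n -> word n') a x : hw h (a :: x) = h a ++ hw h x.
Proof. by []. Qed.

Lemma winv_flatten n (L : seq (word n)) : winv (flatten L) = flatten (rev (map (@winv n) L)).
Proof.
elim: L => //= x L IH.
by rewrite winv_cat IH rev_cons flatten_rcons.
Qed.

Lemma hw_winv n n' (h : letter n -> word n') x : hcompat h -> hw h (winv x) = winv (hw h x).
Proof.
move=> hc; elim: x => //= a x IH.
by rewrite winv_cons hw_cat IH hw_cons winv_cat /hw /= cats0 hc.
Qed.

Lemma wpowS n (u : word n) k : wpow u k.+1 = u ++ wpow u k. Proof. by []. Qed.

Lemma hw_wpow n n' (h : letter n -> word n') u k : hw h (wpow u k) = wpow (hw h u) k.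
Proof. by elim: k => //= k IH; rewrite hw_cat IH. Qed.

Lemma fred_hw n n' (h : letter n -> word n') w : hcompat h ->
  fred (hw h w) = fred (hw h (fred w)).
Proof.
move=> hc; elim: w => // a w IH.
rewrite hw_cons fred_catr IH -fred_catr /fred /= -/(fred w).
case E: (fred w) => [|b s] /=; first by [].
case: ifP => [/eqP Eb|Eb]; last by [].
subst b; rewrite hw_cons hc -/(fred _).
have -> : h a ++ winv (h a) ++ hw h s = [::] ++ h a ++ winv (h a) ++ hw h s by [].
by rewrite fred_cancelw.
Qed.

Lemma fred_hw_eq n n' (h : letter n -> word n') x y : hcompat h ->
  fred x = fred y -> fred (hw h x) = fred (hw h y).
Proof. by move=> hc E; rewrite (fred_hw _ hc) E -(fred_hw _ hc). Qed.

Lemma C_nil n (rels : seq (word n)) : in_nclosure_F rels [::].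
Proof. by exists [::]. Qed.

Lemma C_fred n (rels : seq (word n)) x y :
  fred x = fred y -> in_nclosure_F rels x -> in_nclosure_F rels y.
Proof. by move=> E [l [H1 H2]]; exists l; split => //; rewrite -E. Qed.

Lemma C_cat n (rels : seq (word n)) x y :
  in_nclosure_F rels x -> in_nclosure_F rels y -> in_nclosure_F rels (x ++ y).
Proof.
move=> [l1 [H1 E1]] [l2 [H2 E2]]; exists (l1 ++ l2); split.
  by move=> t; rewrite mem_cat => /orP[/H1|/H2].
by rewrite map_cat flatten_cat; apply: feq_cat.
Qed.

Lemma C_single n (rels : seq (word n)) g r (b : bool) : r \in rels ->
  in_nclosure_F rels (g ++ (if b then winv r else r) ++ winv g).
Proof.
move=> Hr; exists [:: (g, r, b)]; split; first by move=> t; rewrite inE => /eqP -> /=.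
by rewrite /= cats0.
Qed.

Lemma C_conj n (rels : seq (word n)) g x :
  in_nclosure_F rels x -> in_nclosure_F rels (g ++ x ++ winv g).
Proof.
move=> [l [H1 E]].
have E' : fred (g ++ x ++ winv g) = fred (g ++ flatten [seq t.1.1 ++ (if t.2 then winv t.1.2 else t.1.2)
                                 ++ winv t.1.1 | t <- l] ++ winv g).
  by apply: feq_cat => //; apply: feq_cat.
apply: C_fred (esym E') _.
elim: l H1 {E E'} => [|t l IH] H1.
  by apply: (C_fred (x := [::])) ; [rewrite /= fred_winvr|apply: C_nil].
rewrite /= -catA.
move: (flatten _) IH => B IH.
apply: (C_fred (x := (g ++ (t.1.1 ++ (if t.2 then winv t.1.2 else t.1.2) ++ winv t.1.1) ++ winv g) ++ (g ++ B ++ winv g))).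
  by have := fred_cancelw' (g ++ t.1.1 ++ (if t.2 then winv t.1.2 else t.1.2) ++ winv t.1.1) g (B ++ winv g); rewrite -!catA.
apply: C_cat; last by apply: IH => t' Ht'; apply: H1; rewrite inE Ht' orbT.
have := @C_single n rels (g ++ t.1.1) t.1.2 t.2 (H1 t (mem_head _ _)).
by rewrite winv_cat -!catA.
Qed.

Lemma C_winv n (rels : seq (word n)) x :
  in_nclosure_F rels x -> in_nclosure_F rels (winv x).
Proof.
move=> [l [H1 E]].
apply: C_fred (esym (fred_winv E)) _.
elim: l H1 {E} => [|t l IH] H1; first exact: C_nil.
rewrite /= !winv_cat; apply: C_cat.
  by apply: IH => t' Ht'; apply: H1; rewrite inE Ht' orbT.
rewrite winvK -catA.
have := @C_single n rels t.1.1 t.1.2 (~~ t.2) (H1 t (mem_head _ _)).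
by case: (t.2) => //=; rewrite winvK.
Qed.

Lemma C_rel n (rels : seq (word n)) r : r \in rels -> in_nclosure_F rels r.
Proof. by move=> Hr; have := @C_single n rels [::] r false Hr; rewrite /= cats0. Qed.

Lemma C_sim n (rels : seq (word n)) w v :
  in_nclosure_F rels (w ++ winv v) -> in_nclosure_F rels v -> in_nclosure_F rels w.
Proof.
move=> H1 H2; apply: (C_fred (x := (w ++ winv v) ++ v)); last exact: C_cat.
by have := fred_cancelw' w v [::]; rewrite !cats0 catA.
Qed.

Lemma C_hw n n' (h : letter n -> word n') (rels : seq (word n)) (rels' : seq (word n')) x :
  hcompat h -> (forall r, r \in rels -> in_nclosure_F rels' (hw h r)) ->
  in_nclosure_F rels x -> in_nclosure_F rels' (hw h x).
Proof.
move=> hc Hr [l [H1 E]].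
apply: C_fred (esym (fred_hw_eq hc E)) _.
elim: l H1 {E} => [|t l IH] H1; first exact: C_nil.
rewrite /= !hw_cat; rewrite catA; apply: C_cat; last first.
  by apply: IH => t' Ht'; apply: H1; rewrite inE Ht' orbT.
rewrite -catA (hw_winv _ hc); apply: C_conj.
case: (t.2); last exact/Hr/H1/mem_head.
by rewrite (hw_winv _ hc); apply/C_winv/Hr/H1/mem_head.
Qed.

Local Open Scope group_scope.

Lemma eval_nil (K : groupType) n (f : 'I_n -> K) : eval_word f [::] = 1.
Proof. by []. Qed.

Lemma eval_cons (K : groupType) n (f : 'I_n -> K) a x :
  eval_word f (a :: x) = (if a.2 then (f a.1)^-1 else f a.1) * eval_word f x.
Proof. by []. Qed.

Lemma eval_cat (K : groupType) n (f : 'I_n -> K) x y :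
  eval_word f (x ++ y) = eval_word f x * eval_word f y.
Proof. by elim: x => [|a x IH] /=; rewrite ?mul1g // IH mulgA. Qed.

Lemma eval_linv (K : groupType) n (f : 'I_n -> K) a :
  eval_word f [:: linv a] = (eval_word f [:: a])^-1.
Proof. by case: a => i [] /=; rewrite !mulg1 ?invgK. Qed.

Lemma eval_winv (K : groupType) n (f : 'I_n -> K) x :
  eval_word f (winv x) = (eval_word f x)^-1.
Proof.
elim: x => [|a x IH]; first by rewrite /= invg1.
rewrite winv_cons eval_cat IH eval_linv eval_cons -invgM; congr (_^-1).
by rewrite /= mulg1.
Qed.

Lemma eval_cons_red (K : groupType) n (f : 'I_n -> K) a s :
  eval_word f (cons_red a s) = eval_word f (a :: s).
Proof.
case: s => [|b s] //=; case: ifP => [/eqP ->|] //.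
rewrite mulgA; case: a => i [] /=; by rewrite ?mulgV ?mulVg mul1g.
Qed.

Lemma eval_fred (K : groupType) n (f : 'I_n -> K) x :
  eval_word f (fred x) = eval_word f x.
Proof.
elim: x => // a x IH.
by rewrite /fred /= -/(fred x) eval_cons_red eval_cons IH.
Qed.

Lemma eval_wpow (K : groupType) n (f : 'I_n -> K) u k :
  eval_word f (wpow u k) = (eval_word f u) ^+ k.
Proof. by elim: k => // k IH; rewrite wpowS eval_cat IH expgS. Qed.

Lemma eval_C (K : groupType) n (f : 'I_n -> K) rels w :
  (forall r, r \in rels -> eval_word f r = 1) -> in_nclosure_F rels w -> eval_word f w = 1.
Proof.
move=> Hr [l [H1 E]].
rewrite -eval_fred E eval_fred.
elim: l H1 {E} => // t l IH H1.
rewrite /= !eval_cat IH; last by move=> t' Ht'; apply: H1; rewrite inE Ht' orbT.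
have -> : eval_word f (if t.2 then winv t.1.2 else t.1.2) = 1.
  by case: (t.2); rewrite ?eval_winv Hr ?invg1 //; apply/H1/mem_head.
by rewrite mul1g mulg1 eval_winv mulgV.
Qed.

Lemma eval_hw (K : groupType) n n' (h : letter n -> word n') (f' : 'I_n' -> K) (g : 'I_n -> K) w :
  (forall a, eval_word f' (h a) = eval_word g [:: a]) -> eval_word f' (hw h w) = eval_word g w.
Proof.
move=> Hh; elim: w => // a w IH.
by rewrite hw_cons eval_cat IH Hh /= mulg1.
Qed.

Lemma hom1 (G Q : groupType) (p : G -> Q) :
  (forall x y, p (x * y) = p x * p y) -> p 1 = 1.
Proof. by move=> ph; apply: (mulIg (p 1)); rewrite -ph !mul1g. Qed.

Lemma homV (G Q : groupType) (p : G -> Q) :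
  (forall x y, p (x * y) = p x * p y) -> forall x, p x^-1 = (p x)^-1.
Proof.
move=> ph x; apply: (mulIg (p x)); by rewrite -ph !mulVg (hom1 ph).
Qed.

Lemma homX (G Q : groupType) (p : G -> Q) :
  (forall x y, p (x * y) = p x * p y) -> forall x k, p (x ^+ k) = (p x) ^+ k.
Proof.
move=> ph x; elim=> [|k IH]; first by rewrite !expg0 (hom1 ph).
by rewrite !expgS ph IH.
Qed.

Lemma eval_hom (G Q : groupType) (p : G -> Q) n (f : 'I_n -> G) w :
  (forall x y, p (x * y) = p x * p y) -> eval_word (fun i => p (f i)) w = p (eval_word f w).
Proof.
move=> ph; elim: w => [|a w IH]; first by rewrite /= (hom1 ph).
by rewrite /= IH ph; case: (a.2); rewrite ?(homV ph).
Qed.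

Local Close Scope group_scope.
Local Open Scope ring_scope.

Definition esum n (y : 'I_n) (w : word n) : int :=
  \sum_(a <- w) (if a.1 == y then (if a.2 then -1 else 1) else 0).

Lemma esum_cat n y (x z : word n) : esum y (x ++ z) = esum y x + esum y z.
Proof. by rewrite /esum big_cat. Qed.

Lemma esum_fred n y (w : word n) : esum y (fred w) = esum y w.
Proof.
elim: w => // a w IH.
rewrite /fred /= -/(fred w) /esum big_cons; rewrite /esum in IH; rewrite -IH.
case E: (fred w) => [|b s] /=; first by rewrite !big_cons.
case: ifP => [/eqP Eb|Eb]; last by rewrite big_cons.
rewrite big_cons Eb addrA; case: a {E Eb} => i [] /=; case: (i == y) => //=;
by rewrite ?addNr ?subrr ?add0r.
Qed.

Lemma esum_wpow n y (u : word n) k : esum y (wpow u k) = esum y u *+ k.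
Proof. elim: k => [|k IH]; first by rewrite mulr0n /esum big_nil. by rewrite wpowS esum_cat IH mulrS. Qed.

Lemma not_pp n y (u : word n) : (esum y u = 1 \/ esum y u = -1) -> ~ proper_power u.
Proof.
move=> He [v [k [Hk E]]].
have : esum y u = esum y v *+ k by rewrite -esum_fred E esum_fred esum_wpow.
move: Hk E; case: k => [|[|k]] // _ _; rewrite -mulr_natr => E2.
have E3 : esum y u = esum y v * (k.+2)%:Z by rewrite E2 natz.
move: E3; case: He => ->; case: (lerP 1 (esum y v)) => ?; try nia; case: (lerP 0 (esum y v)) => ?; nia.
Qed.

Local Close Scope ring_scope.

Local Open Scope group_scope.

Lemma subg_conj (K : groupType) (H : K -> Prop) t :
  is_subgroup H -> finite_index H ->
  is_subgroup (fun x => H (t^-1 * x * t)) /\ finite_index (fun x => H (t^-1 * x * t)).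
Proof.
move=> [H1 [HM HV]] [reps Hreps]; split.
  split; first by rewrite mulg1 mulVg.
  split.
    move=> x y Hx Hy.
    have -> : t^-1 * (x * y) * t = (t^-1 * x * t) * (t^-1 * y * t).
      by rewrite !mulgA mulgK.
    exact: HM.
  move=> x Hx; have -> : t^-1 * x^-1 * t = (t^-1 * x * t)^-1.
    by rewrite !invgM invgK mulgA.
  exact: HV.
exists [seq t * r * t^-1 | r <- reps] => x.
have [r Hr Hx] := Hreps (t^-1 * x * t).
exists (t * r * t^-1); first by apply/mapP; exists r.
have -> : t^-1 * ((t * r * t^-1)^-1 * x) * t = r^-1 * (t^-1 * x * t).
  by rewrite !invgM invgK !mulgA mulVg mul1g.
exact: Hx.
Qed.

Lemma finres_conj (K : groupType) (s t : K) (H : K -> Prop) :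
  in_finres s -> is_subgroup H -> finite_index H -> H (t^-1 * s * t).
Proof. by move=> Hs HH Hf; have [A B] := subg_conj t HH Hf; exact: (Hs _ A B). Qed.

Lemma nclosure_sub (K : groupType) (S : seq K) x (H : K -> Prop) :
  (forall s, s \in S -> in_finres s) -> in_nclosure S x ->
  is_subgroup H -> finite_index H -> H x.
Proof.
move=> HS [l [Hl ->]] HH Hf.
have [H1 [HM HV]] := HH.
elim: l Hl => [|t l IH] Hl /=; first exact: H1.
apply: HM; last by apply: IH => t' Ht'; apply: Hl; rewrite inE Ht' orbT.
have Hs := HS _ (Hl t (mem_head _ _)).
case: (t.2).
  have -> : t.1.1^-1 * t.1.2^-1 * t.1.1 = (t.1.1^-1 * t.1.2 * t.1.1)^-1.
    by rewrite !invgM invgK mulgA.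
  by apply: HV; apply: finres_conj.
exact: finres_conj.
Qed.

Lemma finres_inv (K : groupType) (x : K) : in_finres x -> in_finres x^-1.
Proof. by move=> Hx H HH Hf; have [_ [_ HV]] := HH; apply: HV; apply: Hx. Qed.

Lemma finres_quot (G Q : groupType) (S : seq G) (p : G -> Q)
  (hS : forall s, s \in S -> in_finres s)
  (p_surj : forall y : Q, exists x : G, p x = y)
  (p_hom : forall x y : G, p (x * y) = p x * p y)
  (p_ker : forall x : G, p x = 1 <-> in_nclosure S x) x :
  in_finres (p x) -> in_finres x.
Proof.
move=> Hpx K HK Hf.
have [K1 [KM KV]] := HK.
pose KQ := fun y : Q => exists2 z, K z & p z = y.
have HKQ : is_subgroup KQ.
  split; first by exists 1 => //; rewrite (hom1 p_hom).
  split.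
    by move=> _ _ [a Ha <-] [b Hb <-]; exists (a * b); [apply: KM|rewrite p_hom].
  by move=> _ [a Ha <-]; exists a^-1; [apply: KV|rewrite (homV p_hom)].
have HfQ : finite_index KQ.
  have [reps Hr] := Hf.
  exists (map p reps) => y.
  have [z <-] := p_surj y.
  have [r Hr1 Hr2] := Hr z.
  exists (p r); first exact: map_f.
  by exists (r^-1 * z) => //; rewrite p_hom (homV p_hom).
have [z Kz Ez] := Hpx KQ HKQ HfQ.
have Hk : K (x * z^-1).
  apply: (nclosure_sub hS _ HK Hf); apply/p_ker.
  by rewrite p_hom (homV p_hom) Ez mulgV.
by have := KM _ _ Hk Kz; rewrite -mulgA mulVg mulg1.
Qed.

Local Close Scope group_scope.

Local Open Scope classical_set_scope.
Local Open Scope ring_scope.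
Local Open Scope ereal_scope.

Lemma ord_le (R : realType) (K1 K2 : groupType) (x : K1) (y : K2) :
  (forall k, (0 < k)%N -> in_finres (y ^+ k)%g -> in_finres (x ^+ k)%g) ->
  ord_mod_res R x <= ord_mod_res R y.
Proof.
move=> H; apply: ereal_inf_le_tmp; apply: image_subset.
by move=> k /= [k0 Hk]; split => //; apply: H.
Qed.

Lemma ord_ge1 (R : realType) (K : groupType) (x : K) : 1 <= ord_mod_res R x.
Proof.
apply: le_ereal_inf_tmp => _ [k [k0 _] <-].
by rewrite lee_fin ler1n.
Qed.

Lemma einv_ge0 (R : realType) (x : \bar R) : 1 <= x -> (0 <= einv x)%R.
Proof. by case: x => // r; rewrite lee_fin /= => H; rewrite invr_ge0 (le_trans ler01 H). Qed.

Lemma einv_le1 (R : realType) (x : \bar R) : 1 <= x -> (einv x <= 1)%R.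
Proof. by case: x => // r; rewrite lee_fin /= => H; rewrite invf_le1 // (lt_le_trans ltr01 H). Qed.

Lemma einv_anti (R : realType) (x y : \bar R) : 1 <= x -> x <= y -> (einv y <= einv x)%R.
Proof.
case: x => [r||] //; case: y => [t||] //=; rewrite ?lee_fin => H1 H2.
- have r0 : (0 < r)%R by apply: lt_le_trans H1.
  have t0 : (0 < t)%R by apply: lt_le_trans H2.
  by rewrite lef_pV2 // posrE.
- by rewrite invr_ge0 (le_trans ler01 H1).
Qed.

Lemma ord_inv (R : realType) (K : groupType) (x : K) : ord_mod_res R x <= ord_mod_res R (x^-1)%g.
Proof.
apply: ord_le => k _; rewrite expVgn => H.
by have := finres_inv H; rewrite invgK.
Qed.

Lemma inv_lt_real (R : realType) (c t : R) : (0 < c)%R -> (c < t)%R -> (t^-1 < c^-1)%R.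
Proof. by move=> c0 ct; rewrite ltf_pV2 // posrE // (lt_trans c0 ct). Qed.

Lemma nu_approx (R : realType) (K : groupType) (s : K) (e : R) :
  in_finres s -> (0 < e)%R ->
  exists a : K, (exists z : int, gexpz a z = s) /\ (einv (ord_mod_res R a) <= einv (nu R s) + e)%R.
Proof.
move=> Hs e0.
have Hnu : nu R s = ereal_sup [set ord_mod_res R a | a in [set a : K | exists z : int, gexpz a z = s]].
  by rewrite /nu asboolT.
have N1 : 1 <= nu R s.
  rewrite Hnu; apply: le_trans (ord_ge1 R s) _; apply: ereal_sup_ubound.
  by exists s => //; exists 1%R; rewrite /= expg1.
move: N1; case E: (nu R s) => [r||] //= N1.
- rewrite lee_fin in N1.
  have r0 : (0 < r)%R by apply: lt_le_trans N1.
  have c0 : (0 < r / (1 + e * r))%R by rewrite divr_gt0 // addr_gt0 // mulr_gt0.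
  have : (r / (1 + e * r))%:E < nu R s.
    rewrite E lte_fin ltr_pdivrMr ?addr_gt0 ?mulr_gt0 //.
    by rewrite mulrDr mulr1 ltrDl mulr_gt0 // mulr_gt0.
  rewrite Hnu => /ereal_sup_gt [_ [a Ha <-] H].
  exists a; split; first exact: Ha.
  move: (ord_mod_res R a) H => o; case: o => [t| |] H; last by [].
  2: by rewrite /=; apply: addr_ge0; [rewrite invr_ge0; exact: ltW|exact: ltW].
  rewrite lte_fin in H; rewrite /=.
  apply: ltW; apply: (lt_le_trans (inv_lt_real c0 H)).
  rewrite invf_div mulrDl mul1r -mulrA divff ?mulr1 //.
  by apply: lt0r_neq0.
- have : (e^-1)%:E < nu R s by rewrite E ltry.
  rewrite Hnu => /ereal_sup_gt [_ [a Ha <-] H].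
  exists a; split; first exact: Ha.
  move: (ord_mod_res R a) H => o; case: o => [t| |] H; last by [].
  2: by rewrite /= add0r; exact: ltW.
  rewrite lte_fin in H; rewrite /=.
  apply: ltW; rewrite add0r.
  have := inv_lt_real _ H; rewrite invrK; apply; by rewrite invr_gt0.
Qed.

Local Close Scope classical_set_scope.
Local Close Scope ereal_scope.
Local Close Scope ring_scope.

Lemma split_l n m (i : 'I_n) : fintype.split (lshift m i) = inl i.
Proof.
case: splitP => [j /= E|k /= E]; first by congr inl; apply: val_inj.
by have := ltn_ord i; rewrite E; lia.
Qed.

Lemma split_r n m (j : 'I_m) : fintype.split (rshift n j) = inr j.
Proof.
case: splitP => [i /= E|k /= E]; last by congr inr; apply: val_inj => /=; lia.
by have := ltn_ord i; rewrite -E; lia.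
Qed.

Definition hlift n m (a : letter n) : word (n + m) := [:: (lshift m a.1, a.2)].
Definition liftw n m (w : word n) : word (n + m) := hw (@hlift n m) w.
Definition hproj n m (a : letter (n + m)) : word n :=
  match fintype.split a.1 with inl i => [:: (i, a.2)] | inr _ => [::] end.
Definition projw n m (w : word (n + m)) : word n := hw (@hproj n m) w.

Lemma hcompat_lift n m : hcompat (@hlift n m).
Proof. by move=> [i b]. Qed.

Lemma hcompat_proj n m : hcompat (@hproj n m).
Proof. by move=> [i b]; rewrite /hproj /=; case: (fintype.split i). Qed.

Lemma projw_liftw n m (w : word n) : @projw n m (liftw m w) = w.
Proof.
elim: w => // a w IH.
rewrite /liftw /projw hw_cons hw_cat /hlift /hw /= /hproj /= split_l. by case: a => i b; rewrite -[in RHS]IH.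
Qed.

Lemma not_pp_lift n m (u : word n) : ~ proper_power u -> ~ proper_power (liftw m u).
Proof.
move=> Hu [v [k [Hk E]]]; apply: Hu; exists (@projw n m v), k; split => //.
have := fred_hw_eq (@hcompat_proj n m) E.
by rewrite -/(@projw n m _) projw_liftw /projw hw_wpow.
Qed.

Lemma esum_liftw n m (j : 'I_m) (w : word n) : esum (rshift n j) (liftw m w) = 0%R.
Proof.
elim: w => [|a w IH]; first by rewrite /esum big_nil.
rewrite /liftw hw_cons esum_cat -/(liftw m w) IH addr0 /esum big_cons big_nil /=.
case: ifP => // /eqP E; have := congr1 val E => /=.
by have := ltn_ord a.1; lia.
Qed.

Lemma liftw_cat n m (x y : word n) : liftw m (x ++ y) = liftw m x ++ liftw m y.
Proof. exact: hw_cat. Qed.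

Lemma liftw_winv n m (x : word n) : liftw m (winv x) = winv (liftw m x).
Proof. exact/hw_winv/(@hcompat_lift n m). Qed.

Lemma liftw_wpow n m (x : word n) k : liftw m (wpow x k) = wpow (liftw m x) k.
Proof. exact: hw_wpow. Qed.

Local Open Scope group_scope.

Lemma eval_liftw (K : groupType) n m (f' : 'I_(n + m) -> K) (g : 'I_n -> K) (w : word n) :
  (forall i, f' (lshift m i) = g i) -> eval_word f' (liftw m w) = eval_word g w.
Proof. by move=> H; apply: eval_hw => -[i b]; rewrite /= H. Qed.

Lemma to_pos (R : realType) (K : groupType) (a s : K) (z : int) :
  gexpz a z = s -> s <> 1 ->
  exists b k, (0 < k)%N /\ b ^+ k = s /\ (ord_mod_res R a <= ord_mod_res R b)%E.
Proof.
case: z => k /= E Hs.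
  exists a, k; split; last by split.
  by case: k E => // E; rewrite expg0 in E; subst.
exists a^-1, k.+1; split => //; split; last exact: ord_inv.
by rewrite expVgn.
Qed.

Local Close Scope group_scope.

Definition hsig n m (c : 'I_m -> word n) (a : letter (n + m)) : word n :=
  match fintype.split a.1 with
  | inl i => [:: (i, a.2)]
  | inr j => if a.2 then winv (c j) else c j
  end.

Lemma hcompat_sig n m (c : 'I_m -> word n) : hcompat (hsig c).
Proof.
move=> [i b]; rewrite /hsig /=; case: (fintype.split i) => // j.
by case: b => //=; rewrite winvK.
Qed.

Definition rel1 n m (c : 'I_m -> word n) (j : 'I_m) : word (n + m) :=
  (rshift n j, true) :: liftw m (c j).

Definition newps n m (ps : seq (word n * nat)) (c : 'I_m -> word n) (k : 'I_m -> nat) :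
  seq (word (n + m) * nat) :=
  [seq (liftw m q.1, q.2) | q <- ps] ++
  [seq (rel1 c j, 1%N) | j <- index_enum 'I_m] ++
  [seq ([:: (rshift n j, false)], k j) | j <- index_enum 'I_m].

Definition newrels n m ps c k := [seq wpow q.1 q.2 | q <- @newps n m ps c k].

Lemma C_rel1 n m ps c k j : in_nclosure_F (@newrels n m ps c k) (rel1 c j).
Proof.
have H : in_nclosure_F (@newrels n m ps c k) (wpow (rel1 c j) 1).
  apply: C_rel; apply/mapP; exists (rel1 c j, 1%N) => //.
  rewrite mem_cat; apply/orP; right; rewrite mem_cat; apply/orP; left.
  by apply/mapP; exists j => //; rewrite mem_index_enum.
by move: H; rewrite /wpow /= cats0.
Qed.

Lemma C_rely n m ps c k j :
  in_nclosure_F (@newrels n m ps c k) (wpow [:: (rshift n j, false)] (k j)).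
Proof.
apply: C_rel; apply/mapP; exists ([:: (rshift n j, false)], k j) => //.
rewrite mem_cat; apply/orP; right; rewrite mem_cat; apply/orP; right.
by apply/mapP; exists j => //; rewrite mem_index_enum.
Qed.

Lemma C_relold n m ps c k q : q \in ps ->
  in_nclosure_F (@newrels n m ps c k) (liftw m (wpow q.1 q.2)).
Proof.
move=> Hq; rewrite liftw_wpow.
apply: C_rel; apply/mapP; exists (liftw m q.1, q.2) => //.
by rewrite mem_cat; apply/orP; left; apply/mapP; exists q.
Qed.

Lemma claimA n m ps c k (w : word (n + m)) :
  in_nclosure_F (@newrels n m ps c k) (w ++ winv (liftw m (hw (hsig c) w))).
Proof.
elim: w => [|a w IH]; first exact: C_nil.
rewrite hw_cons liftw_cat winv_cat.
set X := w ++ _ in IH.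
set Y := winv (liftw m (hsig c a)).
apply: (C_fred (x := ([:: a] ++ X ++ winv [:: a]) ++ ([:: a] ++ Y))).
  have := fred_cancelw' ([:: a] ++ X) [:: a] Y.
  by rewrite /X -!catA.
apply: C_cat; first exact: C_conj.
rewrite /Y; case: a {IH X Y} => i b; rewrite /hsig /=.
case E: (fintype.split i) => [i0|j].
  have Ei : i = lshift m i0 by rewrite -(splitK i) E.
  apply: (C_fred (x := [::])); last exact: C_nil.
  by rewrite /liftw /hw /hlift /= Ei /fred /= eqxx.
have Ei : i = rshift n j by rewrite -(splitK i) E.
subst i; case: b.
  by rewrite liftw_winv winvK; exact: (@C_rel1 n m ps c k j).
have H1 := C_winv (@C_rel1 n m ps c k j).
have H2 := C_conj [:: (rshift n j, false)] H1.
apply: (C_fred _ H2).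
rewrite /rel1 winv_cons /=.
have := fred_cancelw ([:: (rshift n j, false)] ++ winv (liftw m (c j))) [:: (rshift n j, false)] [::].
by rewrite !cats0 -!catA.
Qed.

Local Open Scope group_scope.

Definition fnew (G Q : groupType) (p : G -> Q) n m (f : 'I_n -> G) (b : 'I_m -> G)
  (i : 'I_(n + m)) : Q :=
  match fintype.split i with inl i0 => p (f i0) | inr j => p (b j) end.

Lemma C_liftW n m ps c k (j : 'I_m) :
  in_nclosure_F (@newrels n m ps c k) (liftw m (wpow (c j) (k j))).
Proof.
have A := @claimA n m ps c k (wpow [:: (rshift n j, false)] (k j)).
rewrite hw_wpow /hw /= /hsig /= split_r cats0 -/(hw _ _) in A.
apply: (C_sim _ (@C_rely n m ps c k j)).
by have := C_winv A; rewrite winv_cat winvK.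
Qed.

Lemma pres_new (G Q : groupType) (S : seq G) (p : G -> Q)
  (p_hom : forall x y : G, p (x * y) = p x * p y)
  (p_surj : forall y : Q, exists x : G, p x = y)
  (p_ker : forall x : G, p x = 1 <-> in_nclosure S x)
  n (ps : seq (word n * nat)) (f : 'I_n -> G)
  (Hpres : is_presentation [seq wpow q.1 q.2 | q <- ps] f)
  (b : 'I_(size S) -> G) (k : 'I_(size S) -> nat) (c : 'I_(size S) -> word n)
  (Hc : forall j, eval_word f (c j) = b j)
  (Hb : forall j, b j ^+ k j = nth 1 S j) :
  is_presentation (newrels ps c k) (fnew p f b).
Proof.
set m := size S.
have Hfl : forall i, fnew p f b (lshift m i) = p (f i) by move=> i; rewrite /fnew split_l.
have Hfr : forall j, fnew p f b (rshift n j) = p (b j) by move=> j; rewrite /fnew split_r.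
have Hev : forall w, eval_word (fnew p f b) (liftw m w) = p (eval_word f w).
  by move=> w; rewrite (eval_liftw (g := fun i => p (f i))) // eval_hom.
have HS1 : forall j : 'I_m, p (nth 1 S j) = 1.
  move=> j; apply/p_ker; exists [:: (1, nth 1 S j, false)]; split.
    by move=> t; rewrite inE => /eqP -> /=; apply: mem_nth.
  by rewrite /= invg1 mul1g !mulg1.
have Hrels : forall r, r \in newrels ps c k -> eval_word (fnew p f b) r = 1.
  move=> r /mapP [q]; rewrite !mem_cat => /orP[|/orP[]] /mapP [x Hx ->] -> /=.
  - rewrite -liftw_wpow Hev.
    have -> : eval_word f (wpow x.1 x.2) = 1 by apply/Hpres.2/C_rel/map_f.
    exact: hom1.
  - by rewrite cats0 Hfr Hev Hc mulVg.
  - by rewrite eval_wpow /= Hfr mulg1 -(homX p_hom) Hb HS1.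
split.
  move=> y; have [x <-] := p_surj y; have [w <-] := Hpres.1 x.
  by exists (liftw m w).
move=> w; split; last exact: eval_C.
move=> Hw.
have A := @claimA n m ps c k w.
set sw := hw (hsig c) w in A.
have HL : p (eval_word f sw) = 1.
  have := eval_C Hrels A; rewrite eval_cat eval_winv Hw mul1g Hev.
  by move/eqP; rewrite invg_eq1 => /eqP.
have [l [Hl Ex]] := (p_ker _).1 HL.
have [P [HP1 HP2]] : exists P : word n,
    in_nclosure_F (newrels ps c k) (liftw m P) /\
    eval_word f P = foldr (fun t acc =>
                 (t.1.1^-1 * (if t.2 then t.1.2^-1 else t.1.2) * t.1.1) * acc) 1 l.
  elim: l Hl {Ex} => [|t l IH] Hl; first by exists [::]; split => //; exact: C_nil.
  have [P [HP1 HP2]] : exists P : word n, in_nclosure_F (newrels ps c k) (liftw m P) /\ eval_word f P = foldr (fun t acc => (t.1.1^-1 * (if t.2 then t.1.2^-1 else t.1.2) * t.1.1) * acc) 1 l.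
    by apply: IH => t0 Ht0; apply: Hl; rewrite inE Ht0 orbT.
  have Ht : (index t.1.2 S < m)%N by rewrite index_mem; apply/Hl/mem_head.
  pose j := Ordinal Ht.
  have [wg Hwg] := Hpres.1 t.1.1.
  pose W := wpow (c j) (k j).
  have HW : eval_word f W = t.1.2 by rewrite eval_wpow Hc Hb nth_index //; apply/Hl/mem_head.
  exists ((winv wg ++ (if t.2 then winv W else W) ++ wg) ++ P); split.
    rewrite liftw_cat; apply: C_cat => //.
    rewrite !liftw_cat liftw_winv; apply: (C_fred (x := winv (liftw m wg) ++ liftw m (if t.2 then winv W else W) ++ winv (winv (liftw m wg)))); first by rewrite winvK.
    apply: C_conj.
    case: (t.2); rewrite ?liftw_winv; last exact: C_liftW.
    exact/C_winv/C_liftW.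
  rewrite eval_cat HP2 !eval_cat eval_winv Hwg /=; congr (_ * _).
  by case: (t.2); rewrite ?eval_winv HW mulgA.
have H1 : in_nclosure_F [seq wpow q.1 q.2 | q <- ps] (sw ++ winv P).
  apply/Hpres.2; rewrite eval_cat eval_winv HP2 -Ex mulgV //.
have H2 := C_hw (@hcompat_lift n m) (rels' := newrels ps c k) _ H1.
have H3 : in_nclosure_F (newrels ps c k) (liftw m sw).
  apply: (C_sim _ HP1); rewrite -liftw_winv -liftw_cat; apply: H2.
  by move=> r /mapP [q Hq ->]; exact: C_relold.
exact: C_sim A H3.
Qed.

Local Close Scope group_scope.

Lemma newps_pp n m (ps : seq (word n * nat)) (c : 'I_m -> word n) (k : 'I_m -> nat) :
  (forall q, q \in ps -> ~ proper_power q.1 /\ (0 < q.2)%N) ->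
  (forall j, (0 < k j)%N) ->
  forall q, q \in newps ps c k -> ~ proper_power q.1 /\ (0 < q.2)%N.
Proof.
move=> Hps Hk q; rewrite !mem_cat => /orP[|/orP[]] /mapP [x Hx ->] /=.
- by have [H1 H2] := Hps x Hx; split => //; exact: not_pp_lift.
- split => //; apply: (not_pp (y := rshift n x)); right.
  rewrite /rel1 -cat1s esum_cat esum_liftw addr0 /esum big_cons big_nil /= eqxx.
  by [].
- split => //; apply: (not_pp (y := rshift n x)); left.
  by rewrite /esum big_cons big_nil /= eqxx.
Qed.

Local Open Scope ring_scope.

Lemma ord_quot (R : realType) (G Q : groupType) (S : seq G) (p : G -> Q)
  (hS : forall s, s \in S -> in_finres s)
  (p_surj : forall y : Q, exists x : G, p x = y)
  (p_hom : forall x y : G, p (x * y)%g = (p x * p y)%g)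
  (p_ker : forall x : G, p x = 1%g <-> in_nclosure S x) (g : G) :
  einv (ord_mod_res R (p g)) <= einv (ord_mod_res R g).
Proof.
apply: einv_anti; first exact: ord_ge1.
apply: ord_le => kk _; rewrite -(homX p_hom).
exact: (finres_quot hS p_surj p_hom p_ker).
Qed.

Lemma sum_bound (R : realType) (G Q : groupType) (S : seq G) (p : G -> Q)
  (hS : forall s, s \in S -> in_finres s)
  (p_surj : forall y : Q, exists x : G, p x = y)
  (p_hom : forall x y : G, p (x * y)%g = (p x * p y)%g)
  (p_ker : forall x : G, p x = 1%g <-> in_nclosure S x)
  n (ps : seq (word n * nat)) (f : 'I_n -> G)
  (b : 'I_(size S) -> G) (k : 'I_(size S) -> nat) (c : 'I_(size S) -> word n) :
  \sum_(q <- newps ps c k) einv (ord_mod_res R (eval_word (fnew p f b) q.1)) <=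
  \sum_(q <- ps) einv (ord_mod_res R (eval_word f q.1)) + (size S)%:R +
  \sum_(j < size S) einv (ord_mod_res R (b j)).
Proof.
have Hev : forall w, eval_word (fnew p f b) (liftw (size S) w) = p (eval_word f w).
  move=> w; rewrite (eval_liftw (g := fun i => p (f i))) ?eval_hom //.
  by move=> i; rewrite /fnew split_l.
rewrite !big_cat !big_map /= addrA.
apply: lerD; first apply: lerD.
- apply: ler_sum => q _; rewrite Hev; exact: (ord_quot R hS p_surj p_hom p_ker).
- have -> : (size S)%:R = \sum_(j <- index_enum 'I_(size S)) (1 : R) by rewrite sumr_const card_ord.
  by apply: ler_sum => j _; apply: einv_le1; apply: ord_ge1.
- apply: ler_sum => j _; rewrite /= /fnew split_r mulg1; exact: (ord_quot R hS p_surj p_hom p_ker).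
Qed.

Local Close Scope ring_scope.

Local Open Scope ring_scope.

Lemma core (R : realType) (G Q : groupType) (S : seq G) (p : G -> Q)
  (hS : forall s, s \in S -> s <> 1%g /\ in_finres s)
  (p_surj : forall y : Q, exists x : G, p x = y)
  (p_hom : forall x y : G, p (x * y)%g = (p x * p y)%g)
  (p_ker : forall x : G, p x = 1%g <-> in_nclosure S x)
  n (ps : seq (word n * nat)) (f : 'I_n -> G)
  (Hps : forall q, q \in ps -> ~ proper_power q.1 /\ (0 < q.2)%N)
  (Hpres : is_presentation [seq wpow q.1 q.2 | q <- ps] f)
  (e : R) (e0 : 0 < e) :
  exists v : R, (v%:E <= rdef R Q)%E /\
    n%:R - \sum_(q <- ps) einv (ord_mod_res R (eval_word f q.1)) - relsize R S - e <= v.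
Proof.
set m := size S.
pose e' := e / (m%:R + 1).
have e'0 : 0 < e' by rewrite divr_gt0 // ltr_wpDl.
have Hch : forall j : 'I_m, exists t : G * nat * word n,
   [/\ (0 < t.1.2)%N, (t.1.1 ^+ t.1.2)%g = nth 1%g S j, eval_word f t.2 = t.1.1 &
       einv (ord_mod_res R t.1.1) <= einv (nu R (nth 1%g S j)) + e'].
  move=> j.
  have [Hs1 Hs2] := hS _ (mem_nth 1%g (ltn_ord j)).
  have [a [[z Ez] Ha]] := @nu_approx R G _ e' Hs2 e'0.
  have [bb [kk [Hk [Eb Hord]]]] := @to_pos R G _ _ _ Ez Hs1.
  have [cc Hcc] := Hpres.1 bb.
  exists (bb, kk, cc); split => //=.
  apply: le_trans Ha; apply: einv_anti => //; exact: ord_ge1.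
have [F HF] := boolp.choice Hch.
pose b j := (F j).1.1; pose k j := (F j).1.2; pose c j := (F j).2.
have Hk : forall j, (0 < k j)%N by move=> j; have [] := HF j.
have Hb : forall j, (b j ^+ k j)%g = nth 1%g S j by move=> j; have [] := HF j.
have Hc : forall j, eval_word f (c j) = b j by move=> j; have [] := HF j.
have He : forall j, einv (ord_mod_res R (b j)) <= einv (nu R (nth 1%g S j)) + e'
  by move=> j; have [] := HF j.
exists ((n + m)%:R - \sum_(q <- newps ps c k) einv (ord_mod_res R (eval_word (fnew p f b) q.1))).
split.
  apply: ereal_sup_ubound; exists (n + m)%N, (newps ps c k), (fnew p f b); split.
    exact: newps_pp.
  split => //; exact: pres_new.
have H1 := sum_bound R (fun s Hs => (hS s Hs).2) p_surj p_hom p_ker ps f b k c.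
have H2 : \sum_(j < m) einv (ord_mod_res R (b j)) <= relsize R S + m%:R * e'.
  rewrite /relsize (big_nth 1%g) big_mkord.
  apply: le_trans (ler_sum _ (fun j _ => He j)) _.
  by rewrite big_split /= sumr_const card_ord mulr_natl.
have H3 : m%:R * e' <= e.
  rewrite /e' mulrA ler_pdivrMr ?ltr_wpDl //.
  by rewrite mulrDr mulr1 mulrC lerDl ltW.
rewrite natrD; lra.
Qed.

Local Close Scope ring_scope.

Theorem mainTheorem16 (R : realType) (G : groupType)
  (fpG : finitely_presented G)
  (RGnontriv : exists g : G, in_finres g /\ g <> 1%g)
  (S : seq G)
  (hS : forall s, s \in S -> s <> 1%g /\ in_finres s)
  (Q : groupType) (p : G -> Q)
  (p_hom : forall x y : G, p (x * y)%g = (p x * p y)%g)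
  (p_surj : forall y : Q, exists x : G, p x = y)
  (p_ker : forall x : G, p x = 1%g <-> in_nclosure S x) :
  (rdef R G - (relsize R S)%:E <= rdef R Q)%E.
Proof.
Local Open Scope ring_scope.
Local Open Scope ereal_scope.
have key : rdef R G <= rdef R Q + (relsize R S)%:E.
  apply: ge_ereal_sup => _ [n [ps [f [Hps [Hpres ->]]]]].
  apply/lee_addgt0Pr => e e0.
  have [v [Hv Hle]] := core hS p_surj p_hom p_ker Hps Hpres e0.
  apply: (le_trans (y := (v + relsize R S + e)%:E)).
    rewrite lee_fin; lra.
  by rewrite !EFinD; apply: leeD2r; apply: leeD2r.
have := leeD2r (- (relsize R S)%:E) key.
by rewrite addeK.
Qed.
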